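(* Let $0\to\mathfrak h\xrightarrow{i}\hat{\mathfrak g}\xrightarrow{p}\mathfrak g\to0$ be an abelian extension of a difference Lie algebra $(\mathfrak g,D)$ by $(\mathfrak h,K)$, with $\hat{\mathfrak g}$ carrying the difference operator $\hat D$, and identify $\mathfrak h$ with $i(\mathfrak h)\subset\hat{\mathfrak g}$. For a section $s$ (a linear map $s:\mathfrak g\to\hat{\mathfrak g}$ with $p\circ s=\mathrm{Id}$), define $\varrho:\mathfrak g\to\mathfrak{gl}(\mathfrak h)$ by $\varrho(x)u=[s(x),u]_{\hat{\mathfrak g}}$. Then $\varrho$ is a representation of $(\mathfrak g,D)$ on $\mathfrak h$ with respect to $K$, and it does not depend on the choice of section $s$.
   Context: A difference Lie algebra $(\mathfrak g,D)$: a Lie algebra with linear $D$ such that $D[x,y]=[x,D(y)]-[y,D(x)]+[D(x),D(y)]$; a homomorphism of difference Lie algebras is a Lie algebra homomorphism intertwining the operators. An extension of $(\mathfrak g,D)$ by a difference Lie algebra $(\mathfrak h,K)$ is a short exact sequence of Lie algebras $0\to\mathfrak h\xrightarrow{i}\hat{\mathfrak g}\xrightarrow{p}\mathfrak g\to0$ where $(\hat{\mathfrak g},\hat D)$ is a difference Lie algebra and $\hat D\circ i=i\circ K$, $p\circ\hat D=D\circ p$; it is abelian if $\mathfrak h$ is an abelian Lie algebra. A representation of $(\mathfrak g,D)$ on $V$ with respect to $K:V\to V$ is a Lie algebra representation $\varrho$ with $K(\varrho(x)u)=\varrho(D(x))u+\varrho(x)K(u)+\varrho(D(x))K(u)$.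 *)

(* Defs.v *)
From HB Require Import structures.
From mathcomp Require Import all_boot all_algebra.
Set Implicit Arguments. Unset Strict Implicit. Unset Printing Implicit Defensive.
Import GRing.Theory.
Local Open Scope ring_scope.

Definition is_linear (F : fieldType) (U V : lmodType F) (f : U -> V) : Prop :=
  forall (a : F) (x y : U), f (a *: x + y) = a *: f x + f y.

Definition is_lie_algebra (F : fieldType) (V : lmodType F) (br : V -> V -> V) : Prop :=
  [/\ forall z, is_linear (fun x => br x z),
      forall x, is_linear (br x),
      forall x, br x x = 0 &
      forall x y z, br x (br y z) + br y (br z x) + br z (br x y) = 0].

Definition is_difference_lie (F : fieldType) (V : lmodType F)
    (br : V -> V -> V) (D : V -> V) : Prop :=
  [/\ is_lie_algebra br, is_linear D &
      forall x y, D (br x y) = br x (D y) - br y (D x) + br (D x) (D y)].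

Definition is_lie_hom (F : fieldType) (U V : lmodType F)
    (brU : U -> U -> U) (brV : V -> V -> V) (f : U -> V) : Prop :=
  is_linear f /\ forall x y, f (brU x y) = brV (f x) (f y).

Definition is_difference_extension (F : fieldType) (h gh g : lmodType F)
    (brh : h -> h -> h) (K : h -> h)
    (brgh : gh -> gh -> gh) (Dh : gh -> gh)
    (brg : g -> g -> g) (D : g -> g)
    (i : h -> gh) (p : gh -> g) : Prop :=
  [/\ is_difference_lie brh K /\ is_difference_lie brgh Dh /\ is_difference_lie brg D,
      is_lie_hom brh brgh i /\ is_lie_hom brgh brg p,
      injective i /\ (forall x : g, exists y : gh, p y = x),
      (forall y : gh, p y = 0 <-> exists u : h, y = i u) &
      (forall u, Dh (i u) = i (K u)) /\ (forall y, p (Dh y) = D (p y))].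

Definition is_abelian_extension (F : fieldType) (h gh g : lmodType F)
    (brh : h -> h -> h) (K : h -> h)
    (brgh : gh -> gh -> gh) (Dh : gh -> gh)
    (brg : g -> g -> g) (D : g -> g)
    (i : h -> gh) (p : gh -> g) : Prop :=
  is_difference_extension brh K brgh Dh brg D i p /\
  forall u v : h, brh u v = 0.

Definition is_section (F : fieldType) (gh g : lmodType F)
    (p : gh -> g) (s : g -> gh) : Prop :=
  is_linear s /\ forall x, p (s x) = x.

Definition is_difference_rep (F : fieldType) (g V : lmodType F)
    (brg : g -> g -> g) (D : g -> g) (K : V -> V) (rho : g -> V -> V) : Prop :=
  [/\ forall u, is_linear (fun x => rho x u),
      forall x, is_linear (rho x),
      forall x y u, rho (brg x y) u = rho x (rho y u) - rho y (rho x u) &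
      forall x u, K (rho x u) = rho (D x) u + rho x (K u) + rho (D x) (K u)].

(* Main.v *)
Require Import Defs.
From HB Require Import structures.
From mathcomp Require Import all_boot all_algebra.
From Stdlib Require Import ClassicalEpsilon.
Local Open Scope ring_scope.
Import GRing.Theory.

Section Lin.
Context {F : fieldType} {U V : lmodType F} {f : U -> V}.
Hypothesis fL : is_linear f.
Lemma lin0 : f 0 = 0.
Proof. have := fL 1 0 0; rewrite scale1r addr0 => /(congr1 (fun z => z - f 0)).
by rewrite subrr addrK scale1r => ->. Qed.
Lemma linD x y : f (x + y) = f x + f y.
Proof. by have := fL 1 x y; rewrite !scale1r. Qed.
Lemma linZ a x : f (a *: x) = a *: f x.
Proof. by have := fL a x 0; rewrite !addr0 lin0 addr0. Qed.
Lemma linN x : f (- x) = - f x.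
Proof. by rewrite -scaleN1r linZ scaleN1r. Qed.
Lemma linB x y : f (x - y) = f x - f y.
Proof. by rewrite linD linN. Qed.
End Lin.

Lemma br_anti (F : fieldType) (V : lmodType F) (br : V -> V -> V) :
  is_lie_algebra br -> forall x y, br x y = - br y x.
Proof.
move=> [Ll Lr A _] x y.
have := A (x + y).
rewrite (linD (Ll _)) /= (linD (Lr x)) (linD (Lr y)) !A add0r addr0 => /eqP.
by rewrite addr_eq0 => /eqP.
Qed.

Theorem proposition4p14 (F : fieldType) (h gh g : lmodType F)
    (brh : h -> h -> h) (K : h -> h)
    (brgh : gh -> gh -> gh) (Dh : gh -> gh)
    (brg : g -> g -> g) (D : g -> g)
    (i : h -> gh) (p : gh -> g) :
  is_abelian_extension brh K brgh Dh brg D i p ->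
  forall s : g -> gh, is_section p s ->
    (* well-definedness: [s x, i u] lies in i(h) *)
    (exists rho : g -> h -> h, forall x u, i (rho x u) = brgh (s x) (i u)) /\
    (forall rho : g -> h -> h, (forall x u, i (rho x u) = brgh (s x) (i u)) ->
       is_difference_rep brg D K rho /\
       (* independence of the section *)
       (forall (s' : g -> gh) (rho' : g -> h -> h), is_section p s' ->
          (forall x u, i (rho' x u) = brgh (s' x) (i u)) ->
          forall x u, rho' x u = rho x u)).
Proof.
move=> [[[[Lieh _ _] [[Lgh DL Dbr] [Lieg _ _]]] [[iL ihom] [pL phom]] [iinj _] ker [DI DP]] ab].
move=> s [sL sP].
have LG := Lgh; have anti := @br_anti _ _ _ LG; case: Lgh => [BLl BLr Balt Bjac].
have LGg := Lieg; case: Lieg => [gLl gLr _ _].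
have pi0 : forall u, p (i u) = 0 by move=> u; apply/ker; exists u.
have kill : forall y u, p y = 0 -> brgh y (i u) = 0.
  move=> y u /ker [w ->]; by rewrite -ihom ab (lin0 iL).
have inh : forall x u, exists w, brgh (s x) (i u) = i w.
  move=> x u; apply/ker; by rewrite phom pi0 (lin0 (gLr _)).
split.
  exists (fun x u => proj1_sig (constructive_indefinite_description _ (inh x u))).
  move=> x u; by case: constructive_indefinite_description => w /= ->.
move=> rho Hrho.
have ps : forall x y, p (s x - s y) = x - y by move=> x y; rewrite (linB pL) !sP.
split; last first.
  move=> s' rho' [s'L s'P] H' x u; apply: iinj.
  rewrite H' Hrho -[s' x](subrK (s x)) (linD (BLl _)) /= kill ?add0r //.
  by rewrite (linB pL) s'P sP subrr.
split.
- move=> u a x y; apply: iinj; rewrite /= (iL a) !Hrho sL.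
  by rewrite (BLl (i u) a).
- move=> x a u v; apply: iinj; rewrite (iL a) !Hrho iL.
  by rewrite (BLr (s x) a).
- move=> x y u; apply: iinj.
  rewrite (linB iL) !Hrho.
  have -> : s (brg x y) = (s (brg x y) - brgh (s x) (s y)) + brgh (s x) (s y) by rewrite subrK.
  rewrite (linD (BLl _)) /= kill ?add0r; last by rewrite (linB pL) sP phom !sP subrr.
  have J := Bjac (s x) (s y) (i u).
  rewrite (anti (brgh _ _) (i u)).
  rewrite (anti (i u) (s x)) (linN (BLr _)) in J.
  move/eqP: J; rewrite addr_eq0 => /eqP ->.
  by [].
- move=> x u; apply: iinj.
  rewrite -DI Hrho Dbr DI.
  rewrite !(linD iL) !Hrho.
  have -> : Dh (s x) = (Dh (s x) - s (D x)) + s (D x) by rewrite subrK.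
  have pk : p (Dh (s x) - s (D x)) = 0 by rewrite (linB pL) DP !sP subrr.
  rewrite (linD (BLr _)) (linD (BLl _)) /= (anti (i u) (Dh _ - _)) (anti (i u) (s (D x))) !(kill _ _ pk) oppr0 !add0r.
  by rewrite opprK [X in X + _ = _]addrC.
Qed.
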